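(* Let $p(x)=x^3-a_2x^2+a_1x-a_0$ with real coefficients $a_0,a_1,a_2>0$, and let $\alpha=\min\{a_2,a_0/a_1\}$ and $\beta=\max\{a_2,a_0/a_1\}$. Then $p(x)<0$ for all $x\in(0,\alpha)$ and $p(x)>0$ for all $x>\beta$. *)

(* Defs.v *)
From Stdlib Require Import Reals.
Open Scope R_scope.

(* Main.v *)
Require Import Defs.
From Stdlib Require Import Reals Lra Psatz.
Open Scope R_scope.

Theorem lemma2 (a0 a1 a2 : R) (h0 : 0 < a0) (h1 : 0 < a1) (h2 : 0 < a2) :
  let p := fun x : R => x ^ 3 - a2 * x ^ 2 + a1 * x - a0 in
  let alpha := Rmin a2 (a0 / a1) in
  let beta := Rmax a2 (a0 / a1) in
  (forall x : R, 0 < x < alpha -> p x < 0) /\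
  (forall x : R, beta < x -> 0 < p x).
Proof.
  intros p alpha beta.
  set (c := a0 / a1).
  assert (Hc : a0 = a1 * c) by (unfold c; field; lra).
  assert (E : forall x, p x = x^2 * (x - a2) + a1 * (x - c)).
  { intro x; unfold p; rewrite Hc; ring. }
  split.
  - intros x [Hx Ha]. unfold alpha in Ha.
    assert (x < a2) by (eapply Rlt_le_trans; [exact Ha| apply Rmin_l]).
    assert (x < c) by (eapply Rlt_le_trans; [exact Ha| apply Rmin_r]).
    rewrite E.
    assert (0 < x^2) by (simpl; nra).
    nra.
  - intros x Hb. unfold beta in Hb.
    assert (a2 < x) by (eapply Rle_lt_trans; [apply Rmax_l| exact Hb]).
    assert (c < x) by (eapply Rle_lt_trans; [apply Rmax_r| exact Hb]).
    rewrite E.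
    assert (0 < x^2) by (simpl; nra).
    nra.
Qed.
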